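(* With the notation of the context, for every $v\in V$, $$\kappa_A(v)+\kappa_B(\phi(v))\ \le\ L-1+\frac2N.$$
   Context: Let $A,B$ be groups, $L\ge1$, $a_1,\dots,a_L\in A\setminus\{1\}$, $b_1,\dots,b_L\in B\setminus\{1\}$. Let $N\in\{2,3,\dots\}\cup\{\infty\}$ be the minimum of the orders of $a_1,\dots,a_L,b_1,\dots,b_L$ (convention $1/\infty=0$). Let $W$ be the real vector space with basis the formal symbols $(i,j)$, $1\le i,j\le L$. Let $V=\{\sum_{i,j}x_{ij}(i,j): x_{ij}\ge0,\ \sum_i x_{ij}=1 \text{ for all } j,\ \sum_j x_{ij}=1\text{ for all } i\}$. A disk vector in $A$ is an element of $W$ of the form $\sum_{j=1}^k (i_j,i_{j+1})$ with $k\ge1$, indices $i_1,\dots,i_k\in\{1,\dots,L\}$, $i_{k+1}=i_1$, and $a_{i_1}a_{i_2}\cdots a_{i_k}=1$ in $A$; let $\mathcal D_A$ be the set of disk vectors in $A$, and define $\mathcal D_B$ analogously using the $b_i$. For $v\in V$ set $\kappa_A(v)=\sup\{\sum_s t_s : v=\sum_s t_s d_s+\sum_{i,j}x'_{ij}(i,j),\ t_s\ge0,\ d_s\in\mathcal D_A,\ x'_{ij}\ge 0\}$ (finite sums), and define $\kappa_B$ analogously with $\mathcal D_B$. Let $\phi:V\to V$ be the map $\phi(\sum_{i,j}x_{ij}(i,j))=\sum_{i,j}x_{ij}(j-1,i)$, where $j-1$ is read as $L$ when $j=1$. *)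

(* Defs.v *)
From Stdlib Require Import Reals Lra Lia List Arith Classical ClassicalEpsilon ClassicalDescription.
Import ListNotations.
Open Scope R_scope.

Record Group := {
  carrier :> Type;
  gmul : carrier -> carrier -> carrier;
  gone : carrier;
  ginv : carrier -> carrier;
  gmul_assoc : forall x y z, gmul x (gmul y z) = gmul (gmul x y) z;
  gmul_one_l : forall x, gmul gone x = x;
  gmul_one_r : forall x, gmul x gone = x;
  gmul_inv_l : forall x, gmul (ginv x) x = gone;
  gmul_inv_r : forall x, gmul x (ginv x) = gone
}.

Fixpoint gpow (G : Group) (g : G) (n : nat) : G :=
  match n with O => gone G | S m => gmul G g (gpow G g m) end.

Definition has_order (G : Group) (g : G) (n : nat) : Prop :=
  (0 < n)%nat /\ gpow G g n = gone G /\
  forall m, (0 < m < n)%nat -> gpow G g m <> gone G.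

(* order of g in {1,2,...} ∪ {∞}; None encodes ∞ *)
Definition order (G : Group) (g : G) : option nat :=
  match excluded_middle_informative (exists n, has_order G g n) with
  | left H => Some (proj1_sig (constructive_indefinite_description _ H))
  | right _ => None
  end.

(* minimum in nat ∪ {∞} (None = ∞) *)
Definition minO (x y : option nat) : option nat :=
  match x, y with
  | None, _ => y
  | _, None => x
  | Some m, Some n => Some (Nat.min m n)
  end.

(* 1/N with the convention 1/∞ = 0 *)
Definition recipN (x : option nat) : R :=
  match x with None => 0 | Some n => 1 / INR n end.

Definition Nmin (A B : Group) (L : nat) (a : nat -> A) (b : nat -> B) : option nat :=
  fold_right minO None
    (map (fun i => order A (a i)) (seq 1 L) ++ map (fun i => order B (b i)) (seq 1 L)).

Definition sumL (L : nat) (f : nat -> R) : R := fold_right Rplus 0 (map f (seq 1 L)).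

Definition inRange (L i : nat) : Prop := (1 <= i <= L)%nat.

(* vectors of W are represented by coefficient functions x i j on 1<=i,j<=L *)
Definition in_V (L : nat) (x : nat -> nat -> R) : Prop :=
  (forall i j, inRange L i -> inRange L j -> 0 <= x i j) /\
  (forall j, inRange L j -> sumL L (fun i => x i j) = 1) /\
  (forall i, inRange L i -> sumL L (fun j => x i j) = 1).

(* phi(sum x_ij (i,j)) = sum x_ij (j-1, i), with j-1 read as L when j = 1;
   so the coefficient of (p,q) in phi(x) is x_{q, p+1} (p+1 read as 1 when p = L). *)
Definition succL (L p : nat) : nat := if Nat.eqb p L then 1%nat else S p.
Definition phi (L : nat) (x : nat -> nat -> R) : nat -> nat -> R :=
  fun p q => x q (succL L p).

Definition gprod (G : Group) (a : nat -> G) (ks : list nat) : G :=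
  fold_right (fun i acc => gmul G (a i) acc) (gone G) ks.

Definition cyc_pairs (ks : list nat) : list (nat * nat) :=
  match ks with
  | [] => []
  | k0 :: rest => combine ks (rest ++ [k0])
  end.

(* coefficient of (i,j) in the vector sum_{s=1}^k (i_s, i_{s+1}) *)
Definition dvec (ks : list nat) (i j : nat) : R :=
  INR (length (filter (fun p => andb (Nat.eqb (fst p) i) (Nat.eqb (snd p) j)) (cyc_pairs ks))).

(* ks = [i_1;...;i_k] determines a disk vector in G (w.r.t. a_1..a_L) *)
Definition is_disk (G : Group) (L : nat) (a : nat -> G) (ks : list nat) : Prop :=
  ks <> [] /\ Forall (inRange L) ks /\ gprod G a ks = gone G.

(* values sum_s t_s over decompositions v = sum_s t_s d_s + sum x'_ij (i,j) *)
Definition kappa_set (G : Group) (L : nat) (a : nat -> G) (v : nat -> nat -> R) (r : R) : Prop :=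
  exists ds : list (R * list nat),
    (forall p, In p ds -> 0 <= fst p /\ is_disk G L a (snd p)) /\
    r = fold_right Rplus 0 (map fst ds) /\
    exists x' : nat -> nat -> R,
      (forall i j, inRange L i -> inRange L j -> 0 <= x' i j) /\
      (forall i j, inRange L i -> inRange L j ->
         v i j = fold_right Rplus 0 (map (fun p => fst p * dvec (snd p) i j) ds) + x' i j).

(* supremum of a set of reals (least upper bound; 0 if none exists) *)
Definition Rsup (E : R -> Prop) : R :=
  match excluded_middle_informative (exists l, is_lub E l) with
  | left H => proj1_sig (constructive_indefinite_description _ H)
  | right _ => 0
  end.

Definition kappa (G : Group) (L : nat) (a : nat -> G) (v : nat -> nat -> R) : R :=
  Rsup (kappa_set G L a v).

(* Main.v *)
Require Import Defs.
From Stdlib Require Import Reals List Lra Lia Arith Classical ClassicalEpsilon ClassicalDescription.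
Import ListNotations.
Open Scope R_scope.

Lemma fold_Rplus_init (l : list R) c : fold_right Rplus c l = fold_right Rplus 0 l + c.
Proof. induction l; simpl; [lra| rewrite IHl; lra]. Qed.

Lemma sumL_0 f : sumL 0 f = 0.
Proof. reflexivity. Qed.

Lemma sumL_S L f : sumL (S L) f = sumL L f + f (S L).
Proof.
  unfold sumL. rewrite seq_S, map_app, fold_right_app. simpl.
  rewrite fold_Rplus_init. replace (1 + L)%nat with (S L) by lia. lra.
Qed.

Lemma sumL_ext L f g : (forall i, (1 <= i <= L)%nat -> f i = g i) -> sumL L f = sumL L g.
Proof.
  induction L; intros H; [reflexivity|]. rewrite !sumL_S.
  rewrite IHL by (intros; apply H; lia). rewrite H by lia. reflexivity.
Qed.

Lemma sumL_le L f g : (forall i, (1 <= i <= L)%nat -> f i <= g i) -> sumL L f <= sumL L g.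
Proof.
  induction L; intros H; [rewrite !sumL_0; lra|]. rewrite !sumL_S.
  assert (sumL L f <= sumL L g) by (apply IHL; intros; apply H; lia).
  assert (f (S L) <= g (S L)) by (apply H; lia). lra.
Qed.

Lemma sumL_plus L f g : sumL L (fun i => f i + g i) = sumL L f + sumL L g.
Proof. induction L; [rewrite !sumL_0; lra|]. rewrite !sumL_S, IHL; lra. Qed.

Lemma sumL_scal L c f : sumL L (fun i => c * f i) = c * sumL L f.
Proof. induction L; [rewrite !sumL_0; lra|]. rewrite !sumL_S, IHL; lra. Qed.

Lemma sumL_const L c : sumL L (fun _ => c) = INR L * c.
Proof. induction L; [rewrite sumL_0; simpl; lra|]. rewrite sumL_S, IHL, S_INR; lra. Qed.

Lemma sumL_ind L i f : (1 <= i <= L)%nat ->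
  sumL L (fun j => if Nat.eqb i j then f j else 0) = f i.
Proof.
  induction L; intros H; [lia|]. rewrite sumL_S.
  destruct (Nat.eq_dec i (S L)) as [->|Hn].
  - rewrite Nat.eqb_refl. rewrite (sumL_ext L _ (fun _ => 0)), sumL_const; [lra|].
    intros j Hj. destruct (Nat.eqb_spec (S L) j); [lia|reflexivity].
  - rewrite IHL by lia. destruct (Nat.eqb_spec i (S L)); [lia|lra].
Qed.

Lemma sumL_swap L M f :
  sumL L (fun i => sumL M (fun j => f i j)) = sumL M (fun j => sumL L (fun i => f i j)).
Proof.
  induction L.
  - rewrite sumL_0. rewrite (sumL_ext M _ (fun _ => 0)) by (intros; apply sumL_0).
    rewrite sumL_const; lra.
  - rewrite sumL_S, IHL. rewrite <- sumL_plus. apply sumL_ext; intros; rewrite sumL_S; reflexivity.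
Qed.

Lemma sumL_shift L f : sumL L (fun p => f (S p)) + f 1%nat = sumL L f + f (S L).
Proof.
  induction L; [rewrite !sumL_0; lra|]. rewrite !sumL_S. lra.
Qed.

Lemma min_order (G : Group) (g : G) : forall k, (0 < k)%nat -> gpow G g k = gone G ->
  exists n, has_order G g n.
Proof.
  intro k. induction k as [k IH] using lt_wf_ind. intros Hk Hg.
  destruct (classic (exists m, (0 < m < k)%nat /\ gpow G g m = gone G)) as [[m [Hm Hgm]]|Hn].
  - apply (IH m); lia || assumption.
  - exists k. split; [lia|split; [assumption|]]. intros m Hm Heq. apply Hn; eauto.
Qed.

Lemma order_some (G : Group) (g : G) n : has_order G g n ->
  exists m, order G g = Some m /\ has_order G g m.
Proof.
  intros H. unfold order. destruct (excluded_middle_informative _) as [H'|H'].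
  - eexists; split; [reflexivity|]. exact (proj2_sig (constructive_indefinite_description _ H')).
  - exfalso; apply H'; eauto.
Qed.

Lemma order_has (G : Group) (g : G) m : order G g = Some m -> has_order G g m.
Proof.
  unfold order. destruct (excluded_middle_informative _) as [H'|H']; [|discriminate].
  intros E. injection E as <-. exact (proj2_sig (constructive_indefinite_description _ H')).
Qed.

Lemma has_order_ge2 (G : Group) (g : G) m : g <> gone G -> has_order G g m -> (2 <= m)%nat.
Proof.
  intros Hg [H1 [H2 H3]]. destruct m as [|[|m]]; [lia| |lia].
  simpl in H2. rewrite gmul_one_r in H2. contradiction.
Qed.

Lemma order_le (G : Group) (g : G) k : (0 < k)%nat -> gpow G g k = gone G ->
  exists m, order G g = Some m /\ (m <= k)%nat.
Proof.
  intros Hk Hg. destruct (min_order G g k Hk Hg) as [n Hn].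
  destruct (order_some G g n Hn) as [m [Hm Hom]]. exists m; split; [assumption|].
  destruct (le_lt_dec m k) as [|Hlt]; [assumption|].
  exfalso. destruct Hom as [_ [_ H3]]. apply (H3 k); [lia|assumption].
Qed.

Lemma fold_minO_le (l : list (option nat)) n : In (Some n) l ->
  exists m, fold_right minO None l = Some m /\ (m <= n)%nat.
Proof.
  induction l as [|h l IH]; simpl; [tauto|]. intros [->|Hin].
  - destruct (fold_right minO None l) as [k|]; simpl.
    + exists (Nat.min n k); split; [reflexivity|lia].
    + exists n; split; [reflexivity|lia].
  - destruct (IH Hin) as [m [Hm Hle]]. rewrite Hm.
    destruct h as [k|]; simpl.
    + exists (Nat.min k m); split; [reflexivity|lia].
    + exists m; split; [reflexivity|lia].
Qed.

Lemma fold_minO_in (l : list (option nat)) m : fold_right minO None l = Some m -> In (Some m) l.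
Proof.
  revert m. induction l as [|h l IH]; intros m; simpl; [discriminate|].
  destruct h as [k|]; destruct (fold_right minO None l) as [j|] eqn:E; simpl; intros H.
  - injection H as <-. destruct (Nat.min_spec k j) as [[_ ->]|[_ ->]]; auto.
  - injection H as <-. auto.
  - right; apply IH; congruence.
  - discriminate.
Qed.


Lemma Nmin_ge2 (A B : Group) (L : nat) (a : nat -> A) (b : nat -> B) (Ha : forall i, inRange L i -> a i <> gone A) (Hb : forall i, inRange L i -> b i <> gone B) m : Nmin A B L a b = Some m -> (2 <= m)%nat.
Proof.
  unfold Nmin. intros H. apply fold_minO_in in H.
  apply in_app_or in H. destruct H as [H|H]; apply in_map_iff in H;
  destruct H as [i [Hi Hin]]; apply in_seq in Hin.
  - apply (has_order_ge2 A (a i)); [apply Ha; red; lia| apply order_has; assumption].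
  - apply (has_order_ge2 B (b i)); [apply Hb; red; lia| apply order_has; assumption].
Qed.

Lemma r_bounds (A B : Group) (L : nat) (a : nat -> A) (b : nat -> B) (Ha : forall i, inRange L i -> a i <> gone A) (Hb : forall i, inRange L i -> b i <> gone B) : 0 <= recipN (Nmin A B L a b) <= 1/2.
Proof.
  destruct (Nmin A B L a b) as [m|] eqn:E; simpl; [|lra].
  apply (Nmin_ge2 A B L a b Ha Hb) in E. apply le_INR in E. simpl in E.
  split.
  - apply Rlt_le, Rdiv_lt_0_compat; lra.
  - apply (Rmult_le_reg_r (INR m)); [lra|]. field_simplify; lra.
Qed.

Lemma r_from_order (A B : Group) (L : nat) (a : nat -> A) (b : nat -> B) (Ha : forall i, inRange L i -> a i <> gone A) (Hb : forall i, inRange L i -> b i <> gone B) m k : In (Some m) (map (fun i => order A (a i)) (seq 1 L) ++ map (fun i => order B (b i)) (seq 1 L)) ->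
  (m <= k)%nat -> 1 <= INR k * recipN (Nmin A B L a b).
Proof.
  intros Hin Hmk. destruct (fold_minO_le _ _ Hin) as [m' [Hm' Hle]].
  fold (Nmin A B L a b) in Hm'. pose proof (Nmin_ge2 A B L a b Ha Hb _ Hm') as H2.
  rewrite Hm'. simpl. apply le_INR in H2. simpl in H2.
  assert (INR m' <= INR k) by (apply le_INR; lia).
  apply (Rmult_le_reg_r (INR m')); [lra|]. field_simplify; lra.
Qed.

Lemma rA (A B : Group) (L : nat) (a : nat -> A) (b : nat -> B) (Ha : forall i, inRange L i -> a i <> gone A) (Hb : forall i, inRange L i -> b i <> gone B) i k : inRange L i -> (0 < k)%nat -> gpow A (a i) k = gone A ->
  1 <= INR k * recipN (Nmin A B L a b).
Proof.
  intros Hi Hk Hg. destruct (order_le A (a i) k Hk Hg) as [m [Hm Hmk]].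
  apply (r_from_order A B L a b Ha Hb m); [|assumption]. apply in_or_app; left.
  apply in_map_iff. exists i; split; [assumption|]. apply in_seq. red in Hi; lia.
Qed.

Lemma rB (A B : Group) (L : nat) (a : nat -> A) (b : nat -> B) (Ha : forall i, inRange L i -> a i <> gone A) (Hb : forall i, inRange L i -> b i <> gone B) i k : inRange L i -> (0 < k)%nat -> gpow B (b i) k = gone B ->
  1 <= INR k * recipN (Nmin A B L a b).
Proof.
  intros Hi Hk Hg. destruct (order_le B (b i) k Hk Hg) as [m [Hm Hmk]].
  apply (r_from_order A B L a b Ha Hb m); [|assumption]. apply in_or_app; right.
  apply in_map_iff. exists i; split; [assumption|]. apply in_seq. red in Hi; lia.
Qed.


Lemma combine_cons2 (x y z : nat) l :
  combine (x :: y :: l) ((y :: l) ++ [z]) = (x, y) :: combine (y :: l) (l ++ [z]).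
Proof. reflexivity. Qed.

Lemma mono_dn : forall l x z, (forall p, In p (combine (x :: l) (l ++ [z])) -> (snd p <= fst p)%nat) ->
  (z <= x)%nat /\ forall y, In y l -> (z <= y <= x)%nat.
Proof.
  induction l as [|y l IH]; intros x z H.
  - split; [apply (H (x, z)); simpl; auto| simpl; tauto].
  - rewrite combine_cons2 in H.
    assert (Hxy : (y <= x)%nat) by (apply (H (x, y)); simpl; auto).
    destruct (IH y z) as [Hzy Hl]; [intros p Hp; apply H; simpl; auto|].
    split; [lia|]. intros w [<-|Hw]; [lia|]. specialize (Hl w Hw); lia.
Qed.

Lemma mono_up : forall l x z, (forall p, In p (combine (x :: l) (l ++ [z])) -> (fst p <= snd p)%nat) ->
  (x <= z)%nat /\ forall y, In y l -> (x <= y <= z)%nat.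
Proof.
  induction l as [|y l IH]; intros x z H.
  - split; [apply (H (x, z)); simpl; auto| simpl; tauto].
  - rewrite combine_cons2 in H.
    assert (Hxy : (x <= y)%nat) by (apply (H (x, y)); simpl; auto).
    destruct (IH y z) as [Hzy Hl]; [intros p Hp; apply H; simpl; auto|].
    split; [lia|]. intros w [<-|Hw]; [lia|]. specialize (Hl w Hw); lia.
Qed.

Lemma walk_cases x l :
  (forall y, In y l -> y = x) \/
  ((exists p, In p (combine (x :: l) (l ++ [x])) /\ (fst p < snd p)%nat) /\
   (exists p, In p (combine (x :: l) (l ++ [x])) /\ (snd p < fst p)%nat)).
Proof.
  destruct (classic (exists p, In p (combine (x :: l) (l ++ [x])) /\ (fst p < snd p)%nat)) as [Hup|Hup].
  - destruct (classic (exists p, In p (combine (x :: l) (l ++ [x])) /\ (snd p < fst p)%nat)) as [Hdn|Hdn].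
    + right; tauto.
    + left. destruct (mono_up l x x) as [_ Hl].
      { intros p Hp. destruct (le_lt_dec (fst p) (snd p)); [assumption|].
        exfalso; apply Hdn; eauto. }
      intros y Hy; specialize (Hl y Hy); lia.
  - left. destruct (mono_dn l x x) as [_ Hl].
    { intros p Hp. destruct (le_lt_dec (snd p) (fst p)); [assumption|].
      exfalso; apply Hup; eauto. }
    intros y Hy; specialize (Hl y Hy); lia.
Qed.

Definition psum (W : nat -> nat -> R) (P : list (nat * nat)) : R :=
  fold_right Rplus 0 (map (fun p => W (fst p) (snd p)) P).

Lemma psum_const W x l : (forall y, In y l -> y = x) ->
  psum W (combine (x :: l) (l ++ [x])) = INR (S (length l)) * W x x.
Proof.
  induction l as [|y l IH]; intros H.
  - unfold psum; simpl; lra.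
  - assert (y = x) by (apply H; simpl; auto). subst y.
    rewrite combine_cons2.
    change (W x x + psum W (combine (x :: l) (l ++ [x])) = INR (S (length (x :: l))) * W x x).
    rewrite IH by (intros; apply H; simpl; auto). simpl length. rewrite (S_INR (S _)). simpl. lra.
Qed.

Lemma gprod_const (G : Group) (a : nat -> G) x l : (forall y, In y l -> y = x) ->
  gprod G a (x :: l) = gpow G (a x) (S (length l)).
Proof.
  intros H. simpl. f_equal. induction l as [|y l IH]; [reflexivity|].
  assert (y = x) by (apply H; simpl; auto). subst y. simpl. f_equal. apply IH.
  intros; apply H; simpl; auto.
Qed.

Lemma psum_nonneg W P : (forall p, In p P -> 0 <= W (fst p) (snd p)) -> 0 <= psum W P.
Proof.
  induction P as [|p P IH]; intros H; unfold psum; simpl; [lra|].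
  fold (psum W P). assert (0 <= W (fst p) (snd p)) by (apply H; simpl; auto).
  assert (0 <= psum W P) by (apply IH; intros; apply H; simpl; auto). lra.
Qed.

Lemma psum_ge1 W P p : In p P -> (forall q, In q P -> 0 <= W (fst q) (snd q)) ->
  W (fst p) (snd p) <= psum W P.
Proof.
  induction P as [|q P IH]; intros Hin H; [destruct Hin|].
  change (W (fst p) (snd p) <= W (fst q) (snd q) + psum W P).
  assert (0 <= W (fst q) (snd q)) by (apply H; simpl; auto).
  assert (0 <= psum W P) by (apply psum_nonneg; intros; apply H; simpl; auto).
  destruct Hin as [<-|Hin]; [lra|].
  assert (W (fst p) (snd p) <= psum W P) by (apply IH; [assumption| intros; apply H; simpl; auto]).
  lra.
Qed.

Lemma psum_ge2 W P p1 p2 : In p1 P -> In p2 P -> p1 <> p2 ->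
  (forall q, In q P -> 0 <= W (fst q) (snd q)) ->
  W (fst p1) (snd p1) + W (fst p2) (snd p2) <= psum W P.
Proof.
  induction P as [|q P IH]; intros H1 H2 Hne H; [destruct H1|].
  change (W (fst p1) (snd p1) + W (fst p2) (snd p2) <= W (fst q) (snd q) + psum W P).
  assert (0 <= W (fst q) (snd q)) by (apply H; simpl; auto).
  assert (H' : forall q', In q' P -> 0 <= W (fst q') (snd q')) by (intros; apply H; simpl; auto).
  destruct H1 as [<-|H1]; destruct H2 as [<-|H2].
  - congruence.
  - pose proof (psum_ge1 W P p2 H2 H'); lra.
  - pose proof (psum_ge1 W P p1 H1 H'); lra.
  - pose proof (IH H1 H2 Hne H'); lra.
Qed.

Definition S2 (L : nat) (f : nat -> nat -> R) := sumL L (fun i => sumL L (fun j => f i j)).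

Lemma sumL_zero L : sumL L (fun _ => 0) = 0.
Proof. rewrite sumL_const; lra. Qed.

Lemma S2_plus L f g : S2 L (fun i j => f i j + g i j) = S2 L f + S2 L g.
Proof.
  unfold S2. rewrite <- sumL_plus. apply sumL_ext; intros. apply sumL_plus.
Qed.

Lemma S2_scal L c f : S2 L (fun i j => c * f i j) = c * S2 L f.
Proof.
  unfold S2. rewrite <- sumL_scal. apply sumL_ext; intros. apply sumL_scal.
Qed.

Lemma S2_ext L f g : (forall i j, inRange L i -> inRange L j -> f i j = g i j) -> S2 L f = S2 L g.
Proof.
  intros H. unfold S2. apply sumL_ext; intros. apply sumL_ext; intros. apply H; red; lia.
Qed.

Lemma S2_le L f g : (forall i j, inRange L i -> inRange L j -> f i j <= g i j) -> S2 L f <= S2 L g.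
Proof.
  intros H. unfold S2. apply sumL_le; intros. apply sumL_le; intros. apply H; red; lia.
Qed.

Lemma S2_pair L W (P : list (nat * nat)) :
  (forall p, In p P -> inRange L (fst p) /\ inRange L (snd p)) ->
  S2 L (fun i j => W i j * INR (length (filter (fun p => andb (Nat.eqb (fst p) i) (Nat.eqb (snd p) j)) P)))
  = psum W P.
Proof.
  induction P as [|q P IH]; intros H.
  - simpl. rewrite (S2_ext L _ (fun _ _ => 0)) by (intros; simpl; lra).
    unfold S2. rewrite (sumL_ext L _ (fun _ => 0)) by (intros; apply sumL_zero). apply sumL_zero.
  - change (psum W (q :: P)) with (W (fst q) (snd q) + psum W P).
    rewrite <- IH by (intros; apply H; simpl; auto).
    rewrite (S2_ext L _ (fun i j => (if Nat.eqb (fst q) i then (if Nat.eqb (snd q) j then W i j else 0) else 0)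
         + W i j * INR (length (filter (fun p => andb (Nat.eqb (fst p) i) (Nat.eqb (snd p) j)) P)))).
    2:{ intros i j _ _. cbn [filter length]. destruct (Nat.eqb (fst q) i); destruct (Nat.eqb (snd q) j); cbn [andb length];
        try rewrite S_INR; lra. }
    rewrite S2_plus. f_equal. unfold S2.
    destruct (H q) as [Hq1 Hq2]; [simpl; auto|]. red in Hq1, Hq2.
    rewrite (sumL_ext L _ (fun i => if Nat.eqb (fst q) i then W i (snd q) else 0)).
    + apply (sumL_ind L (fst q) (fun i => W i (snd q))); lia.
    + intros i Hi. destruct (Nat.eqb (fst q) i).
      * apply (sumL_ind L (snd q) (fun j => W i j)); lia.
      * apply sumL_zero.
Qed.

Lemma disk_bound (G : Group) (L : nat) (a : nat -> G) (W : nat -> nat -> R) (r : R)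
  (Hr : forall i k, inRange L i -> (0 < k)%nat -> gpow G (a i) k = gone G -> 1 <= INR k * r)
  (HWd : forall i, W i i = r)
  (HWnn : forall i j, inRange L i -> inRange L j -> 0 <= W i j)
  (HW2 : forall i j i' j', inRange L i -> inRange L j -> inRange L i' -> inRange L j' ->
      (i < j)%nat -> (j' < i')%nat -> 1 <= W i j + W i' j')
  ks : is_disk G L a ks -> 1 <= S2 L (fun i j => W i j * dvec ks i j).
Proof.
  intros [Hne [Hrange Hprod]]. destruct ks as [|x l]; [congruence|].
  unfold dvec. change (cyc_pairs (x :: l)) with (combine (x :: l) (l ++ [x])).
  rewrite Forall_forall in Hrange.
  assert (Hpr : forall p, In p (combine (x :: l) (l ++ [x])) -> inRange L (fst p) /\ inRange L (snd p)).
  { intros [p1 p2] Hp. cbn [fst snd]. split.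
      - apply Hrange. exact (in_combine_l _ _ _ _ Hp).
      - apply Hrange. apply in_combine_r in Hp. apply in_app_or in Hp.
        destruct Hp as [Hp|[Hp|[]]]; [right; assumption| left; assumption]. }
  rewrite S2_pair by exact Hpr.
  destruct (walk_cases x l) as [Hc|[[p1 [H1 L1]] [p2 [H2 L2]]]].
  - rewrite psum_const by assumption. rewrite HWd. apply (Hr x); [apply Hrange; simpl; auto|lia|].
    rewrite <- gprod_const by assumption. exact Hprod.
  - destruct (Hpr p1 H1), (Hpr p2 H2).
    eapply Rle_trans; [|apply psum_ge2; [exact H1| exact H2| |]].
    + apply HW2; assumption.
    + intros ->. lia.
    + intros q Hq. destruct (Hpr q Hq). apply HWnn; assumption.
Qed.

Lemma kappa_bound (G : Group) (L : nat) (a : nat -> G) (W : nat -> nat -> R) (v : nat -> nat -> R)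
  (HWnn : forall i j, inRange L i -> inRange L j -> 0 <= W i j)
  (Hvnn : forall i j, inRange L i -> inRange L j -> 0 <= v i j)
  (Hd : forall ks, is_disk G L a ks -> 1 <= S2 L (fun i j => W i j * dvec ks i j)) :
  kappa G L a v <= S2 L (fun i j => W i j * v i j).
Proof.
  assert (Hub : forall r, kappa_set G L a v r -> r <= S2 L (fun i j => W i j * v i j)).
  { intros r [ds [Hds [-> [x' [Hx' Hv]]]]].
    set (D := fun i j => fold_right Rplus 0 (map (fun p => fst p * dvec (snd p) i j) ds)) in *.
    apply Rle_trans with (S2 L (fun i j => W i j * D i j)).
    - clear Hv. subst D. induction ds as [|[t ks] ds IH]; simpl.
      + rewrite (S2_ext L _ (fun _ _ => 0)) by (intros; lra).
        unfold S2. rewrite (sumL_ext L _ (fun _ => 0)) by (intros; apply sumL_zero). rewrite sumL_zero; lra.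
      + rewrite (S2_ext L _ (fun i j => t * (W i j * dvec ks i j) +
            W i j * fold_right Rplus 0 (map (fun p => fst p * dvec (snd p) i j) ds)))
          by (intros; ring).
        rewrite S2_plus, S2_scal.
        destruct (Hds (t, ks)) as [Ht Hk]; [simpl; auto|]. simpl in Ht, Hk.
        pose proof (Hd ks Hk).
        assert (fold_right Rplus 0 (map fst ds) <=
           S2 L (fun i j => W i j * fold_right Rplus 0 (map (fun p => fst p * dvec (snd p) i j) ds))).
        { apply IH. intros; apply Hds; simpl; auto. }
        nra.
    - apply S2_le. intros i j Hi Hj. rewrite (Hv i j Hi Hj).
      pose proof (HWnn i j Hi Hj). pose proof (Hx' i j Hi Hj). rewrite Rmult_plus_distr_l. assert (0 <= W i j * x' i j) by (apply Rmult_le_pos; assumption). unfold D; lra. }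
  unfold kappa, Rsup. destruct (excluded_middle_informative _) as [H|H].
  - destruct (constructive_indefinite_description _ H) as [l [Hl1 Hl2]]. simpl.
    apply Hl2. intros r Hr. apply Hub; exact Hr.
  - apply Rle_trans with (S2 L (fun _ _ => 0)).
    + unfold S2. rewrite (sumL_ext L _ (fun _ => 0)) by (intros; apply sumL_zero). rewrite sumL_zero; lra.
    + apply S2_le. intros. pose proof (HWnn i j H0 H1). pose proof (Hvnn i j H0 H1). nra.
Qed.

Definition W0 (r : R) (i j : nat) : R := if Nat.eqb i j then r else 1/2.
Definition W1 (r : R) (i j : nat) : R := if Nat.eqb i j then r else if Nat.ltb i j then 1 else 0.

Lemma F0_eq L r (m : nat -> nat -> R) (Hm : forall i, inRange L i -> sumL L (fun j => m i j) = 1) :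
  S2 L (fun i j => W0 r i j * m i j) = INR L * (1/2) + (r - 1/2) * sumL L (fun i => m i i).
Proof.
  unfold S2. rewrite <- sumL_scal, <- sumL_const, <- sumL_plus. apply sumL_ext. intros i Hi.
  rewrite (sumL_ext L _ (fun j => 1/2 * m i j + (if Nat.eqb i j then (r - 1/2) * m i j else 0))).
  - rewrite sumL_plus, sumL_scal, Hm by (red; lia).
    rewrite (sumL_ind L i (fun j => (r - 1/2) * m i j)) by lia. lra.
  - intros j Hj. unfold W0. destruct (Nat.eqb i j); lra.
Qed.

Lemma F1_eq L r (m : nat -> nat -> R) :
  S2 L (fun i j => W1 r i j * m i j) = r * sumL L (fun i => m i i) + S2 L (fun i j => if Nat.ltb i j then m i j else 0).
Proof.
  rewrite (S2_ext L _ (fun i j => (if Nat.eqb i j then r * m i j else 0) + (if Nat.ltb i j then m i j else 0))).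
  - rewrite S2_plus. f_equal. unfold S2. rewrite <- sumL_scal. apply sumL_ext. intros i Hi.
    apply (sumL_ind L i (fun j => r * m i j)); lia.
  - intros i j _ _. unfold W1. destruct (Nat.eqb_spec i j).
    + subst. rewrite Nat.ltb_irrefl. lra.
    + destruct (Nat.ltb i j); lra.
Qed.

Lemma key_identity L (v : nat -> nat -> R) (HL : (1 <= L)%nat) (Hv : in_V L v) :
  S2 L (fun i j => if Nat.ltb i j then v i j else 0) +
  S2 L (fun p q => if Nat.ltb p q then v q (succL L p) else 0) = INR L - 1.
Proof.
  destruct Hv as [Hnn [Hcol Hrow]].
  rewrite (S2_ext L (fun p q => if Nat.ltb p q then v q (succL L p) else 0)
                    (fun p q => if Nat.leb (S p) q then v q (S p) else 0)).
  2:{ intros p q Hp Hq. unfold succL. change (Nat.ltb p q) with (Nat.leb (S p) q).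
      destruct (Nat.leb_spec (S p) q); [|reflexivity].
      destruct (Nat.eqb_spec p L); [red in Hq; lia|reflexivity]. }
  unfold S2 at 2. rewrite sumL_swap.
  rewrite (sumL_ext L (fun q => sumL L (fun p => if Nat.leb (S p) q then v q (S p) else 0))
                    (fun q => sumL L (fun j => if Nat.leb j q then v q j else 0) - v q 1%nat)).
  2:{ intros q Hq.
      pose proof (sumL_shift L (fun j => if Nat.leb j q then v q j else 0)) as Hs. cbv beta in Hs.
      destruct (Nat.leb_spec 1 q); [|lia]. destruct (Nat.leb_spec (S L) q); [lia|]. lra. }
  unfold S2. rewrite <- sumL_plus.
  rewrite (sumL_ext L _ (fun i => 1 - v i 1%nat)).
  - rewrite (sumL_ext L (fun i => 1 - v i 1%nat) (fun i => 1 + (-1) * v i 1%nat)) by (intros; ring).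
    rewrite sumL_plus, sumL_scal, sumL_const, Hcol by (red; lia). lra.
  - intros i Hi. rewrite <- (Hrow i) by (red; lia).
    assert (sumL L (fun j => if Nat.ltb i j then v i j else 0) + sumL L (fun j => if Nat.leb j i then v i j else 0)
            = sumL L (fun j => v i j)).
    { rewrite <- sumL_plus. apply sumL_ext. intros j _.
      destruct (Nat.ltb_spec i j); destruct (Nat.leb_spec j i); try lia; lra. }
    lra.
Qed.

Theorem mainTheorem6 (A B : Group) (L : nat) (a : nat -> A) (b : nat -> B)
  (HL : (1 <= L)%nat)
  (Ha : forall i, inRange L i -> a i <> gone A)
  (Hb : forall i, inRange L i -> b i <> gone B)
  (v : nat -> nat -> R) (Hv : in_V L v) :
  kappa A L a v + kappa B L b (phi L v) <= INR L - 1 + 2 * recipN (Nmin A B L a b).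
Proof.
  pose proof (r_bounds A B L a b Ha Hb) as Hrb.
  set (r := recipN (Nmin A B L a b)) in *.
  pose proof (key_identity L v HL Hv) as Hkey.
  destruct Hv as [Hnn [Hcol Hrow]].
  assert (Hpnn : forall i j, inRange L i -> inRange L j -> 0 <= phi L v i j).
  { intros i j Hi Hj. unfold phi, succL. apply Hnn; [assumption|].
    red in Hi |- *. destruct (Nat.eqb_spec i L); lia. }
  assert (Hprow : forall i, inRange L i -> sumL L (fun j => phi L v i j) = 1).
  { intros i Hi. unfold phi. apply Hcol. unfold succL. red in Hi |- *. destruct (Nat.eqb_spec i L); lia. }
  assert (HW0nn : forall i j, inRange L i -> inRange L j -> 0 <= W0 r i j).
  { intros; unfold W0; destruct (Nat.eqb i j); lra. }
  assert (HW1nn : forall i j, inRange L i -> inRange L j -> 0 <= W1 r i j).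
  { intros; unfold W1; destruct (Nat.eqb i j); [lra|]; destruct (Nat.ltb i j); lra. }
  assert (HW0d : forall i, W0 r i i = r) by (intros; unfold W0; rewrite Nat.eqb_refl; reflexivity).
  assert (HW1d : forall i, W1 r i i = r) by (intros; unfold W1; rewrite Nat.eqb_refl; reflexivity).
  assert (HW02 : forall i j i' j', inRange L i -> inRange L j -> inRange L i' -> inRange L j' ->
      (i < j)%nat -> (j' < i')%nat -> 1 <= W0 r i j + W0 r i' j').
  { intros i j i' j' _ _ _ _ H1 H2. unfold W0.
    destruct (Nat.eqb_spec i j); [lia|]. destruct (Nat.eqb_spec i' j'); [lia|]. lra. }
  assert (HW12 : forall i j i' j', inRange L i -> inRange L j -> inRange L i' -> inRange L j' ->
      (i < j)%nat -> (j' < i')%nat -> 1 <= W1 r i j + W1 r i' j').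
  { intros i j i' j' _ _ _ _ H1 H2. unfold W1.
    destruct (Nat.eqb_spec i j); [lia|]. destruct (Nat.eqb_spec i' j'); [lia|].
    destruct (Nat.ltb_spec i j); [|lia]. destruct (Nat.ltb_spec i' j'); [lia|]. lra. }
  pose proof (rA A B L a b Ha Hb) as HrA. pose proof (rB A B L a b Ha Hb) as HrB.
  fold r in HrA, HrB.
  assert (kA0 := kappa_bound A L a (W0 r) v HW0nn Hnn (disk_bound A L a (W0 r) r HrA HW0d HW0nn HW02)).
  assert (kA1 := kappa_bound A L a (W1 r) v HW1nn Hnn (disk_bound A L a (W1 r) r HrA HW1d HW1nn HW12)).
  assert (kB0 := kappa_bound B L b (W0 r) (phi L v) HW0nn Hpnn (disk_bound B L b (W0 r) r HrB HW0d HW0nn HW02)).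
  assert (kB1 := kappa_bound B L b (W1 r) (phi L v) HW1nn Hpnn (disk_bound B L b (W1 r) r HrB HW1d HW1nn HW12)).
  rewrite F0_eq in kA0 by (intros; apply Hrow; assumption).
  rewrite F0_eq in kB0 by (intros; apply Hprow; assumption).
  rewrite F1_eq in kA1, kB1.
  change (S2 L (fun p q => if Nat.ltb p q then v q (succL L p) else 0)) with
    (S2 L (fun p q => if Nat.ltb p q then phi L v p q else 0)) in Hkey.
  set (U1 := S2 L (fun p q => if Nat.ltb p q then phi L v p q else 0)) in *.
  set (U0 := S2 L (fun p q => if Nat.ltb p q then v p q else 0)) in *.
  set (t1 := sumL L (fun i => v i i)) in *.
  set (t2 := sumL L (fun i => phi L v i i)) in *.
  assert (0 <= t1).
  { apply Rle_trans with (sumL L (fun _ => 0)); [rewrite sumL_zero; lra|].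
    apply sumL_le. intros; apply Hnn; red; lia. }
  assert (0 <= t2).
  { apply Rle_trans with (sumL L (fun _ => 0)); [rewrite sumL_zero; lra|].
    apply sumL_le. intros; apply Hpnn; red; lia. }
  destruct (Rle_lt_dec (t1 + t2) 2).
  - assert (r * (t1 + t2) <= r * 2) by (apply Rmult_le_compat_l; lra). lra.
  - assert (0 <= (1/2 - r) * (t1 + t2 - 2)) by (apply Rmult_le_pos; lra). lra.
Qed.
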